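(* Let $\Phi,\Psi$ be Young functions satisfying $\Delta_2$ such that $\Phi\in\Delta'$ and $\tilde\Psi\in\Delta'$. Then there exists $C=C(\Phi,\Psi)>0$ such that \[ \Psi\circ\Phi^{-1}(s)\,\Psi\circ\Phi^{-1}(t)\le C\,\Psi\circ\Phi^{-1}(st)\qquad\forall\,s,t\ge0. \]
   Context: A Young function is $\Phi(t)=\int_0^t\varphi(s)\,ds$ with $\varphi$ increasing, right continuous, $\varphi(t)=0$ iff $t=0$; $\tilde\Psi(t)=\sup_{s>0}\{st-\Psi(s)\}$ is the complementary function. $\Delta_2$: $\Phi(2t)\le C\Phi(t)$ for all $t\ge0$; $\Delta'$: $\Phi(st)\le C\Phi(s)\Phi(t)$ for all $s,t\ge0$ (some $C>1$). *)

(* Defs.v *)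
From HB Require Import structures.
From mathcomp Require Import all_boot all_order all_algebra.
From mathcomp Require Import all_classical all_reals all_analysis.
Set Implicit Arguments. Unset Strict Implicit. Unset Printing Implicit Defensive.
Import Order.TTheory GRing.Theory Num.Theory.
Import numFieldNormedType.Exports.
Local Open Scope classical_set_scope.
Local Open Scope ring_scope.

Definition young (R : realType) (Phi : R -> R) : Prop :=
  exists phi : R -> R,
    (forall s t, 0 <= s -> s <= t -> phi s <= phi t) /\
    (forall t, 0 <= t -> phi x @[x --> t^'+] --> phi t) /\
    (forall t, 0 <= t -> (phi t = 0 <-> t = 0)) /\
    (forall t, 0 <= t ->
       (Phi t)%:E = (\int[@lebesgue_measure R]_(x in `[0%R, t]%classic) (phi x)%:E)%E).

Definition compl_young (R : realType) (Psi : R -> R) (t : R) : \bar R :=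
  ereal_sup [set (s * t - Psi s)%:E | s in [set s : R | 0 < s]].

(* Inverse of a Young function on [0,+oo) (Young functions are increasing
   bijections of [0,+oo)); written as  Phi^{-1}(s) = sup {t >= 0 | Phi t <= s}. *)
Definition young_inv (R : realType) (Phi : R -> R) (s : R) : R :=
  sup [set t : R | 0 <= t /\ Phi t <= s].

Definition Delta2 (R : realType) (Phi : R -> R) : Prop :=
  exists C : R, forall t, 0 <= t -> Phi (2 * t) <= C * Phi t.

Definition Delta' (R : realType) (Phi : R -> R) : Prop :=
  exists C : R, 1 < C /\ forall s t, 0 <= s -> 0 <= t -> Phi (s * t) <= C * Phi s * Phi t.

Definition Delta'_ext (R : realType) (Phi : R -> \bar R) : Prop :=
  exists C : R, 1 < C /\ forall s t : R, (0 <= s)%R -> (0 <= t)%R ->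
    (Phi (s * t)%R <= C%:E * Phi s * Phi t)%E.

(* Main.v *)
Require Import Defs.
From HB Require Import structures.
From mathcomp Require Import all_boot all_order all_algebra.
From mathcomp Require Import all_classical all_reals all_analysis measurable_realfun.
From mathcomp Require Import ring lra.
Import Order.TTheory GRing.Theory Num.Theory.
Import numFieldNormedType.Exports.
Local Open Scope classical_set_scope.
Local Open Scope ring_scope.

Section Y.
Variables (R : realType) (phi : R -> R).
Hypothesis phi_nd : forall s t, 0 <= s -> s <= t -> phi s <= phi t.
Definition g : R -> R := fun x => phi (Num.max x 0).
Lemma g_nd : {homo g : x y / x <= y}.
Proof. move=> x y xy; rewrite /g; apply: phi_nd; first by rewrite le_max lexx orbT.
by rewrite ge_max !le_max xy lexx !orbT. Qed.
Lemma mg (D : set R) : measurable D -> measurable_fun D (EFin \o g).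
Proof. move=> mD; apply/measurable_EFinP; exact: nondecreasing_measurable g_nd. Qed.

Hypothesis phi0 : forall t, 0 <= t -> (phi t = 0 <-> t = 0).
Lemma phi_ge0 t : 0 <= t -> 0 <= phi t.
Proof. move=> t0; have <- : phi 0 = 0 by apply/phi0. exact: phi_nd. Qed.
Lemma g_ge0 t : 0 <= g t.
Proof. by apply: phi_ge0; rewrite le_max lexx orbT. Qed.

Variable Phi : R -> R.
Hypothesis hPhi : forall t, 0 <= t ->
       (Phi t)%:E = (\int[@lebesgue_measure R]_(x in `[0%R, t]%classic) (phi x)%:E)%E.

Lemma Phi_g t : 0 <= t ->
  (Phi t)%:E = (\int[@lebesgue_measure R]_(x in `[0%R, t]%classic) (g x)%:E)%E.
Proof.
move=> t0; rewrite hPhi //; apply: eq_integral => x; rewrite inE /= in_itv /= => /andP[x0 _].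
by rewrite /g max_l.
Qed.

Lemma Phi_split a b : 0 <= a -> a <= b ->
  (Phi b)%:E = ((Phi a)%:E + \int[@lebesgue_measure R]_(x in `]a, b]%classic) (g x)%:E)%E.
Proof.
move=> a0 ab; rewrite !Phi_g //; last exact: le_trans ab.
rewrite (@itv_bndbnd_setU _ _ (BLeft 0) (BRight a) (BRight b)) //.
rewrite ge0_integral_setU //.
- by apply: mg; apply: measurableU.
- by move=> x _; rewrite lee_fin g_ge0.
apply/disj_setPS => x [] /=; rewrite !in_itv /= => /andP[_ xa] /andP[ax _].
by move: (lt_le_trans ax xa); rewrite ltxx.
Qed.

Lemma int_bounds a b : 0 <= a -> a <= b ->
  ((phi a * (b - a))%:E <= \int[@lebesgue_measure R]_(x in `]a, b]%classic) (g x)%:E <=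
   (phi b * (b - a))%:E)%E.
Proof.
move=> a0 ab.
have mu : lebesgue_measure (`]a, b]%classic : set R) = (b - a)%:E.
  rewrite lebesgue_measure_itv /=; case: ltP => /= ab'.
    by rewrite -EFinD.
  rewrite lee_fin in ab'.
  have ba : b = a by apply/eqP; rewrite eq_le ab ab'.
  by rewrite ba subrr.
apply/andP; split.
- rewrite EFinM -mu -integral_cst //.
  apply: ge0_le_integral => //; try exact: mg.
  + by move=> x _; rewrite lee_fin phi_ge0.
  move=> x /=; rewrite in_itv /= => /andP[ax _]; rewrite lee_fin /g.
  by apply: phi_nd => //; rewrite le_max (ltW ax).
- rewrite EFinM -mu -integral_cst //.
  apply: ge0_le_integral => //; try exact: mg.
  + by move=> x _; rewrite lee_fin g_ge0.
  move=> x /=; rewrite in_itv /= => /andP[ax xb]; rewrite lee_fin /g.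
  rewrite max_l; last by rewrite (le_trans a0) // ltW.
  by apply: phi_nd => //; rewrite (le_trans a0) // ltW.
Qed.
End Y.
Record YoungP (R : realType) (Phi phi : R -> R) : Prop := {
  yp_nd : forall s t, 0 <= s -> s <= t -> phi s <= phi t;
  yp_ge0 : forall t, 0 <= t -> 0 <= phi t;
  yp_pos : forall t, 0 < t -> 0 < phi t;
  yp_0 : Phi 0 = 0;
  yp_b : forall a b, 0 <= a -> a <= b ->
    (b - a) * phi a <= Phi b - Phi a <= (b - a) * phi b }.

Arguments yp_nd {R Phi phi}. Arguments yp_ge0 {R Phi phi}. Arguments yp_pos {R Phi phi}.
Arguments yp_0 {R Phi phi}. Arguments yp_b {R Phi phi}.

Section Abs.
Set Default Proof Using "All".
Context {R : realType} {Phi phi : R -> R}.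
Variable Y : YoungP R Phi phi.
Let phi_nd := yp_nd Y.
Let phi_ge0 {t} (h : 0 <= t) : 0 <= phi t := yp_ge0 Y t h.
Let phi_pos {t} (h : 0 < t) : 0 < phi t := yp_pos Y t h.
Let P0 := yp_0 Y.
Let Pb := yp_b Y.

Lemma Phi_ge0 t : 0 <= t -> 0 <= Phi t.
Proof.
move=> t0; have /andP[h _] := Pb _ _ (lexx 0) t0; rewrite P0 in h.
have := mulr_ge0 t0 (phi_ge0 (lexx 0)); lra.
Qed.

Lemma Phi_nd a b : 0 <= a -> a <= b -> Phi a <= Phi b.
Proof.
move=> a0 ab; have /andP[h _] := Pb _ _ a0 ab.
have : 0 <= b - a by rewrite subr_ge0.
move=> /mulr_ge0 /(_ (phi_ge0 a0)); lra.
Qed.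

Lemma Phi_le x : 0 <= x -> Phi x <= x * phi x.
Proof. by move=> x0; have /andP[_ h] := Pb _ _ (lexx 0) x0; rewrite P0 !subr0 in h. Qed.

Lemma Phi_support x s : 0 <= x -> 0 <= s -> Phi x + phi x * (s - x) <= Phi s.
Proof.
move=> x0 s0; case: (leP x s) => xs.
  have /andP[h _] := Pb _ _ x0 xs; rewrite -lerBrDl mulrC; exact: h.
have /andP[_ h] := Pb _ _ s0 (ltW xs).
by rewrite -lerBrDl; rewrite -opprB mulrN lerNl opprB mulrC.
Qed.

Lemma Phi_conv l a : 0 <= l -> l <= 1 -> 0 <= a -> Phi (l * a) <= l * Phi a.
Proof.
move=> l0 l1 a0; set c := l * a.
have c0 : 0 <= c by rewrite mulr_ge0.
have ca : c <= a by rewrite /c -[leRHS]mul1r ler_wpM2r.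
have /andP[h _] := Pb _ _ c0 ca.
have h2 := Phi_le c c0.
have pc := phi_ge0 c0.
(* l*Phi a >= l*Phi c + l*(a-c)*phi c ; (1-l)*Phi c <= (1-l)*c*phi c = l*(a-c)*phi c *)
have e : l * (a - c) = (1 - l) * c by rewrite /c; ring.
have h3 : (1 - l) * Phi c <= l * ((a - c) * phi c).
  by rewrite mulrA e -mulrA ler_wpM2l // subr_ge0.
have h4 : l * ((a - c) * phi c) <= l * (Phi a - Phi c) by rewrite ler_wpM2l.
lra.
Qed.

Lemma Phi_unb t : 1 <= t -> (t - 1) * phi 1 <= Phi t.
Proof.
move=> t1; have /andP[h _] := Pb _ _ ler01 t1.
have := Phi_ge0 1 ler01; lra.
Qed.

Definition S s := [set t : R | 0 <= t /\ Phi t <= s].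

Lemma S_bound s t : 0 <= s -> S s t -> t <= 1 + s / phi 1.
Proof.
move=> s0 [t0 Pt]; have p1 := phi_pos ltr01.
have q : 0 <= s / phi 1 by rewrite divr_ge0 // ltW.
case: (leP t 1) => t1; first lra.
have := Phi_unb t (ltW t1) => h.
have : (t - 1) * phi 1 <= s by lra.
by rewrite -ler_pdivlMr // => ?; lra.
Qed.

Lemma S_has_sup s : 0 <= s -> has_sup (S s).
Proof.
move=> s0; split; first by exists 0; split => //; rewrite P0.
by exists (1 + s / phi 1) => t; apply: S_bound.
Qed.

Lemma inv_ge0 s : 0 <= s -> 0 <= young_inv Phi s.
Proof.
move=> s0; have h := sup_upper_bound (S_has_sup s s0).
by apply: (h 0); split => //; rewrite P0.
Qed.

Lemma inv_ub s t : 0 <= s -> S s t -> t <= young_inv Phi s.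
Proof. by move=> s0 h; have := sup_upper_bound (S_has_sup s s0); apply. Qed.

Lemma inv_le s x : 0 <= s -> (forall t, S s t -> t <= x) -> young_inv Phi s <= x.
Proof. by move=> s0 h; apply: ge_sup => //; case: (S_has_sup s s0). Qed.

Lemma inv_scale c x : 1 <= c -> 0 <= x -> young_inv Phi (c * x) <= c * young_inv Phi x.
Proof.
move=> c1 x0; have c0 : 0 < c by apply: (lt_le_trans ltr01 c1).
apply: inv_le; first by rewrite mulr_ge0 // ltW.
move=> a [a0 Pa]; rewrite -ler_pdivrMl //.
apply: inv_ub => //; split; first by rewrite mulr_ge0 // invr_ge0 ltW.
apply: (le_trans (Phi_conv (c^-1) a _ _ a0)).
- by rewrite invr_ge0 ltW.
- by rewrite invf_le1.
by rewrite ler_pdivrMl.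
Qed.

Lemma inv_mul C s t : 1 < C ->
  (forall s t, 0 <= s -> 0 <= t -> Phi (s * t) <= C * Phi s * Phi t) ->
  0 <= s -> 0 <= t ->
  young_inv Phi s * young_inv Phi t <= young_inv Phi (C * s * t).
Proof.
move=> C1 hC s0 t0.
have Cst : 0 <= C * s * t by rewrite !mulr_ge0 // ltW // (lt_trans ltr01).
set M := young_inv Phi (C * s * t).
have M0 : 0 <= M := inv_ge0 _ Cst.
have key a b : S s a -> S t b -> a * b <= M.
  move=> [a0 Pa] [b0 Pb']; apply: inv_ub => //; split; first exact: mulr_ge0.
  apply: (le_trans (hC _ _ a0 b0)).
  rewrite -mulrA -[X in _ <= X]mulrA ler_wpM2l //; first by rewrite ltW // (lt_trans ltr01).
  by apply: ler_pM => //; apply: Phi_ge0.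
have It0 := inv_ge0 _ t0.
case: (eqVneq (young_inv Phi t) 0) => [->|It]; first by rewrite mulr0.
have Itp : 0 < young_inv Phi t by rewrite lt0r It.
rewrite -ler_pdivlMr //; apply: inv_le => // a Sa.
rewrite ler_pdivlMr // mulrC.
case: (eqVneq a 0) => [->|a0]; first by rewrite mulr0.
have ap : 0 < a by rewrite lt0r a0; case: Sa.
rewrite -ler_pdivlMr //; apply: inv_le => // b Sb.
by rewrite ler_pdivlMr // mulrC; apply: key.
Qed.

End Abs.

Section PsiSec.
Context {R : realType} {Psi psi : R -> R}.
Variable Y : YoungP R Psi psi.

Lemma compl_lb w z : 0 < z -> ((z * w - Psi z)%:E <= compl_young Psi w)%E.
Proof. by move=> z0; apply: ereal_sup_ubound; exists z. Qed.

Lemma compl_eq x : 0 < x -> compl_young Psi (psi x) = (x * psi x - Psi x)%:E.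
Proof.
move=> x0; apply/le_anti/andP; split; last exact: compl_lb.
apply: ge_ereal_sup => _ [s s0 <-]; rewrite lee_fin.
have := Phi_support Y x s (ltW x0) (ltW s0); lra.
Qed.

Lemma psi_mult C : 1 < C ->
  (forall s t : R, (0 <= s)%R -> (0 <= t)%R ->
    (compl_young Psi (s * t)%R <= C%:E * compl_young Psi s * compl_young Psi t)%E) ->
  forall x y, 0 <= x -> 0 <= y -> C * (Psi x * Psi y) <= Psi (2 * C * x * y).
Proof.
move=> C1 hC x y x0 y0.
have C0 : 0 < C by apply: lt_trans C1.
have Pz : 0 <= Psi (2 * C * x * y).
  by apply: (Phi_ge0 Y); do 3 (apply: mulr_ge0 => //); lra.
case: (eqVneq x 0) => [->|xn0]; first by rewrite !(mulr0, mul0r, yp_0 Y).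
case: (eqVneq y 0) => [->|yn0]; first by rewrite !(mulr0, mul0r, yp_0 Y).
have xp : 0 < x by rewrite lt0r xn0.
have yp : 0 < y by rewrite lt0r yn0.
have u0 : 0 <= psi x := yp_ge0 Y x x0.
have v0 : 0 <= psi y := yp_ge0 Y y y0.
have Px := Phi_le Y x x0; have Py := Phi_le Y y y0.
have Px0 := Phi_ge0 Y x x0; have Py0 := Phi_ge0 Y y y0.
have h := hC _ _ u0 v0.
rewrite !compl_eq // -!EFinM in h.
set z := 2 * C * x * y.
have zp : 0 < z by rewrite !mulr_gt0.
have := le_trans (compl_lb (psi x * psi y) z zp) h; rewrite lee_fin => h2.
have e1 : C * (x * psi x - Psi x) * (y * psi y - Psi y) <= C * (x * psi x * (y * psi y)).
  rewrite -mulrA; apply: ler_wpM2l; first lra.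
  apply: ler_pM; lra.
have e2 : C * (Psi x * Psi y) <= C * (x * psi x * (y * psi y)).
  by apply: ler_wpM2l; [lra | apply: ler_pM].
have e3 : z * (psi x * psi y) = 2 * (C * (x * psi x * (y * psi y))) by rewrite /z; ring.
lra.
Qed.
End PsiSec.


Lemma young_YP (R : realType) (Phi : R -> R) : young Phi -> exists phi, YoungP R Phi phi.
Proof.
move=> [phi [nd [_ [z hint]]]]; exists phi; split => //.
- by move=> t t0; apply: (phi_ge0 _ _ nd z).
- move=> t t0; rewrite lt0r (phi_ge0 _ _ nd z) ?ltW // andbT; apply/eqP => /(z t (ltW t0)) t00.
  by move: t0; rewrite t00 ltxx.
- apply/eqP; rewrite -(@eqe R); apply/eqP.
  by rewrite hint // set_itv1 integral_set1.
- move=> a b a0 ab; have := Phi_split _ _ nd z _ hint _ _ a0 ab.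
  have /andP[l u] := int_bounds _ _ nd z _ _ a0 ab.
  move=> e; set I := (\int[_]_(_ in _) _)%E in l u e *.
  have fI : I = (Phi b - Phi a)%:E by rewrite EFinB e [X in (X - _)%E]addeC addeK.
  rewrite fI !lee_fin in l u.
  by rewrite [_ * phi a]mulrC [_ * phi b]mulrC l u.
Qed.

Lemma pow_bound (R : realType) (Psi psi : R -> R) (Y : YoungP R Psi psi) c :
  Delta2 Psi -> 0 <= c -> exists K, 0 < K /\ forall x, 0 <= x -> Psi (c * x) <= K * Psi x.
Proof.
move=> [D hD] c0; set D1 := Num.max D 1.
have D10 : 0 < D1 by rewrite lt_max ltr01 orbT.
have h2 x : 0 <= x -> Psi (2 * x) <= D1 * Psi x.
  move=> x0; apply: (le_trans (hD x x0)); apply: ler_wpM2r; first exact: (Phi_ge0 Y x x0).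
  by rewrite le_max lexx.
have hn n x : 0 <= x -> Psi (2 ^+ n * x) <= D1 ^+ n * Psi x.
  elim: n => [|n IH] x0; first by rewrite !expr0 !mul1r.
  rewrite exprS -mulrA; apply: (le_trans (h2 _ _)); first by rewrite mulr_ge0 // exprn_ge0.
  by rewrite exprS -mulrA; apply: ler_wpM2l; [exact: ltW | exact: IH].
set n := Num.bound c.
exists (D1 ^+ n); split; first exact: exprn_gt0.
move=> x x0; apply: le_trans (hn n x x0); apply: (Phi_nd Y); first exact: mulr_ge0.
apply: ler_wpM2r => //; apply: (le_trans (ltW (archi_boundP c0))).
rewrite -natrX ler_nat; apply: ltnW; exact: ltn_expl.
Qed.

Theorem lemma3p6 (R : realType) (Phi Psi : R -> R) :
  young Phi -> young Psi -> Delta2 Phi -> Delta2 Psi ->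
  Delta' Phi -> Delta'_ext (compl_young Psi) ->
  exists C : R, 0 < C /\
    forall s t : R, 0 <= s -> 0 <= t ->
      Psi (young_inv Phi s) * Psi (young_inv Phi t)
        <= C * Psi (young_inv Phi (s * t)).
Proof.
move=> /young_YP [phi YP] /young_YP [psi YQ] _ D2 [C1 [C11 hC1]] [C2 [C21 hC2]].
have C10 : 0 < C1 by apply: lt_trans C11.
have C20 : 0 < C2 by apply: lt_trans C21.
have c0 : 0 <= 2 * C2 * C1 by rewrite !mulr_ge0 // ltW.
have [K [K0 hK]] := @pow_bound _ _ _ YQ _ D2 c0.
exists (K / C2); split; first by rewrite divr_gt0.
move=> s t s0 t0.
set x := young_inv Phi s; set y := young_inv Phi t; set w := young_inv Phi (s * t).
have x0 : 0 <= x := inv_ge0 YP s s0.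
have y0 : 0 <= y := inv_ge0 YP t t0.
have st0 : 0 <= s * t by rewrite mulr_ge0.
have w0 : 0 <= w := inv_ge0 YP _ st0.
have h1 := psi_mult YQ C2 C21 hC2 x y x0 y0.
have h2 : x * y <= C1 * w.
  apply: (le_trans (inv_mul YP C1 s t C11 hC1 s0 t0)).
  by rewrite -mulrA; apply: (inv_scale YP) => //; rewrite ltW.
have h3 : Psi (2 * C2 * x * y) <= Psi (2 * C2 * C1 * w).
  apply: (Phi_nd YQ); first by rewrite !mulr_ge0 // ltW.
  rewrite -!mulrA; apply: ler_wpM2l => //; apply: ler_wpM2l; first exact: ltW.
  exact: h2.
have h4 := hK w w0.
rewrite mulrAC ler_pdivlMr // mulrC.
by apply: (le_trans h1); apply: (le_trans h3).
Qed.
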